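(* There exist a noisy discrete memoryless classical channel $N_n$ and a perfect $d$-level quantum channel $Q_p$ (for some $d\ge 1$) such that the one-shot zero-error classical capacity of the parallel use of $N_n$ and $Q_p$ strictly exceeds the product $\mathfrak{C}_0(N_n)\cdot \mathfrak{C}_0(Q_p)=\alpha(G(N_n))\cdot d$ of their individual one-shot zero-error classical capacities.
   Context: A discrete memoryless classical channel $N$ has a finite input alphabet $\mathcal{X}$, a finite output alphabet $\mathcal{Y}$ and conditional probabilities $P(y|x)$ with $\sum_{y}P(y|x)=1$ for each $x$. Let $\Gamma(x)=\{y: P(y|x)>0\}$. Distinct inputs $x,x'$ are confusable if $\Gamma(x)\cap\Gamma(x')\neq\varnothing$. The confusability graph $G(N)$ has vertex set $\mathcal{X}$, with an edge between distinct confusable inputs. The one-shot zero-error classical capacity of $N$ is $\mathfrak{C}_0(N)=\alpha(G(N))$, the independence number, i.e. the maximum number of messages that can be sent with zero error in one use (capacity is measured as a number of messages, not its logarithm). A perfect $d$-level quantum channel is the identity map on density operators on $\mathbb{C}^d$; its one-shot zero-error classical capacity is $d$. The one-shot zero-error classical capacity of the parallel (single, simultaneous) use of $N$ and a perfect $d$-level quantum channel is the largest integer $M$ for which there exist, for each message $m\in\{1,\dots,M\}$, a classical input $x_m\in\mathcal{X}$ and a quantum state $\rho_m$ on $\mathbb{C}^d$, and, for each output $y\in\mathcal{Y}$, a measurement (POVM) $\{E^{(y)}_{m'}\}_{m'=1}^M$ on $\mathbb{C}^d$, such that the receiver, seeing output $y$ of $N$ on input $x_m$ and measuring $\rho_m$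 with $\{E^{(y)}_{m'}\}$, obtains outcome $m$ with probability one, i.e. $\sum_{y}P(y|x_m)\,\mathrm{Tr}(E^{(y)}_{m}\rho_m)=1$ for every $m$. *)

(* Defs.v *)
(* Complex scalars are modelled by algC (algebraic complex
   numbers, a numClosedFieldType); channel probabilities are taken in algC too
   (they are required to be real and nonnegative via the order of algC). *)
From HB Require Import structures.
From mathcomp Require Import all_boot all_order all_algebra all_field.
Set Implicit Arguments.
Unset Strict Implicit.
Unset Printing Implicit Defensive.
Import Order.TTheory GRing.Theory Num.Theory.
Local Open Scope ring_scope.

Record cchannel (X Y : finType) := CChannel {
  cprob : X -> Y -> algC;
  cprob_ge0 : forall x y, 0 <= cprob x y;
  cprob_sum1 : forall x, \sum_(y : Y) cprob x y = 1
}.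

Definition noisy (X Y : finType) (N : cchannel X Y) : Prop :=
  exists x y, 0 < cprob N x y /\ cprob N x y < 1.

Definition Gamma (X Y : finType) (N : cchannel X Y) (x : X) : {set Y} :=
  [set y | 0 < cprob N x y].

Definition confusable (X Y : finType) (N : cchannel X Y) : rel X :=
  fun x x' => (x != x') && (Gamma N x :&: Gamma N x' != set0).

Definition independent_set (X : finType) (e : rel X) (S : {set X}) : bool :=
  [forall x in S, forall x' in S, ~~ e x x'].

Definition independence_number (X : finType) (e : rel X) : nat :=
  \max_(S : {set X} | independent_set e S) #|S|.

Definition C0 (X Y : finType) (N : cchannel X Y) : nat :=
  independence_number (confusable N).

Definition adjmx (m n : nat) (A : 'M[algC]_(m, n)) : 'M[algC]_(n, m) :=
  (map_mx Num.conj A)^T.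

Definition hermitian_mx (d : nat) (A : 'M[algC]_d) : Prop := adjmx A = A.

Definition psd_mx (d : nat) (A : 'M[algC]_d) : Prop :=
  hermitian_mx A /\ forall v : 'cV[algC]_d, 0 <= (adjmx v *m A *m v) 0 0.

Definition density_mx (d : nat) (rho : 'M[algC]_d) : Prop :=
  psd_mx rho /\ \tr rho = 1.

Definition povm (d M : nat) (E : 'I_M -> 'M[algC]_d) : Prop :=
  (forall m, psd_mx (E m)) /\ \sum_(m < M) E m = 1%:M.

(* A zero-error code with M messages for the parallel (single, simultaneous)
   use of N and the perfect d-level quantum channel (identity map):
   classical inputs x_m, states rho_m, and for each output y a POVM E^(y),
   with sum_y P(y|x_m) Tr(E^(y)_m rho_m) = 1 for every message m. *)
Definition zero_error_code_parallel (X Y : finType) (N : cchannel X Y)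
    (d M : nat) : Prop :=
  exists (x : 'I_M -> X) (rho : 'I_M -> 'M[algC]_d)
         (E : Y -> 'I_M -> 'M[algC]_d),
    (forall m, density_mx (rho m)) /\
    (forall y, povm (E y)) /\
    (forall m, \sum_(y : Y) cprob N (x m) y * \tr (E y m *m rho m) = 1).

(* Main.v *)
Require Import Defs.
From mathcomp Require Import all_boot all_order all_algebra all_field.
From mathcomp Require Import zify ring.
Set Implicit Arguments.
Unset Strict Implicit.
Unset Printing Implicit Defensive.
Import Order.TTheory GRing.Theory Num.Theory.
Local Open Scope ring_scope.

Definition basesL : seq (seq nat) :=
  [:: [:: 0;1;2;3]; [:: 0;4;5;6]; [:: 7;8;2;9]; [:: 7;10;6;11]; [:: 1;4;12;13];
      [:: 8;10;13;14]; [:: 15;16;3;9]; [:: 15;17;5;11]; [:: 16;17;12;14]]%N.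

Definition vtab : seq (seq int) :=
  [:: [:: 0;0;0;1]; [:: 0;0;1;0]; [:: 1;1;0;0]; [:: 1;-1;0;0]; [:: 0;1;0;0];
      [:: 1;0;1;0]; [:: 1;0;-1;0]; [:: 1;-1;1;-1]; [:: 1;-1;-1;1]; [:: 0;0;1;1];
      [:: 1;1;1;1]; [:: 0;1;0;-1]; [:: 1;0;0;1]; [:: 1;0;0;-1]; [:: 0;1;-1;0];
      [:: 1;1;-1;1]; [:: 1;1;1;-1]; [:: -1;1;1;1]]%Z.

Definition wtab : seq nat := [:: 4;4;2;2;4;2;2;1;1;2;1;2;2;2;2;1;1;1]%N.

Definition inbn (y x : nat) : bool := x \in nth [::] basesL y.
Definition vt (m i : nat) : int := nth 0%Z (nth [::] vtab m) i.
Definition wt (m : nat) : nat := nth 0%N wtab m.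

Definition fsum (T : Type) (add : T -> T -> T) (z : T) (F : nat -> T) (s : seq nat) :=
  foldr (fun i a => add (F i) a) z s.

Lemma fact_cnt : all (fun x => fsum addn 0%N (fun y => nat_of_bool (inbn y x)) (iota 0 9) == 2%N) (iota 0 18).
Proof. by vm_compute. Qed.

Lemma fact_norm : all (fun m => ((wt m)%:Z * fsum +%R 0%R (fun i => vt m i * vt m i) (iota 0 4) == 4)%R) (iota 0 18).
Proof. by vm_compute. Qed.

Lemma fact_sum : all (fun y => all (fun i => all (fun j =>
   fsum +%R 0%R (fun m => if inbn y m then ((wt m)%:Z * vt m i * vt m j)%R else 0%R) (iota 0 18)
   == ((4 * (i == j))%N%:Z)) (iota 0 4)) (iota 0 4)) (iota 0 9).
Proof. by vm_compute. Qed.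

Lemma big_fsumR (R : nmodType) (F : nat -> R) n :
  \sum_(i < n) F i = fsum +%R 0 F (iota 0 n).
Proof.
rewrite -(big_mkord xpredT F) /index_iota subn0.
by elim: (iota 0 n) => [|a s IH]; rewrite ?big_nil ?big_cons //= IH.
Qed.

Lemma big_fsumN (F : nat -> nat) n :
  (\sum_(i < n) F i)%N = fsum addn 0%N F (iota 0 n).
Proof.
rewrite -(big_mkord xpredT F) /index_iota subn0.
by elim: (iota 0 n) => [|a s IH]; rewrite ?big_nil ?big_cons //= IH.
Qed.

Lemma cnt (x : 'I_18) : (\sum_(y < 9) nat_of_bool (inbn y x))%N = 2%N.
Proof.
rewrite (big_fsumN (fun y => nat_of_bool (inbn y x))); move/allP: fact_cnt => /(_ x); rewrite mem_iota.
by move=> /(_ (ltn_ord x)) /eqP.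
Qed.

Lemma norm_fact (m : 'I_18) :
  (wt m)%:Z * (\sum_(i < 4) vt m i * vt m i) = 4.
Proof.
rewrite (big_fsumR (fun i => vt m i * vt m i)); move/allP: fact_norm => /(_ m); rewrite mem_iota.
by move=> /(_ (ltn_ord m)) /eqP.
Qed.

Lemma sum_fact (y : 'I_9) (i j : 'I_4) :
  \sum_(m < 18) (if inbn y m then (wt m)%:Z * vt m i * vt m j else 0)
   = (4 * (i == j))%N%:Z.
Proof.
rewrite (big_fsumR (fun m => if inbn y m then (wt m)%:Z * vt m i * vt m j else 0)).
move/allP: fact_sum => /(_ y); rewrite mem_iota => /(_ (ltn_ord y)).
move/allP => /(_ i); rewrite mem_iota => /(_ (ltn_ord i)).
move/allP => /(_ j); rewrite mem_iota => /(_ (ltn_ord j)).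
by move/eqP.
Qed.

Definition cp (x : 'I_18) (y : 'I_9) : algC := if inbn y x then 2^-1 else 0.

Lemma cp_ge0 x y : 0 <= cp x y.
Proof. by rewrite /cp; case: ifP => // _; rewrite invr_ge0 ler0n. Qed.

Lemma sum_if (x : 'I_18) (c : algC) :
  \sum_(y < 9) (if inbn y x then c else 0) = c *+ 2.
Proof.
rewrite -[in RHS](cnt x) -sumrMnr; apply: eq_bigr => y _.
by case: (inbn y x).
Qed.

Lemma cp_sum1 x : \sum_(y : 'I_9) cp x y = 1.
Proof.
rewrite (sum_if x (2^-1)) -[_ *+ 2]mulr_natl mulfV //.
by rewrite pnatr_eq0.
Qed.

Definition NN : cchannel 'I_18 'I_9 := CChannel cp_ge0 cp_sum1.

Lemma NN_noisy : noisy NN.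
Proof.
exists (0 : 'I_18), (0 : 'I_9); rewrite /= /cp /=.
rewrite invr_gt0 ltr0n /=; split => //.
by rewrite invf_lt1 ?ltr0n // ltr1n.
Qed.

Lemma Gamma_NN x : Gamma NN x = [set y : 'I_9 | inbn y x].
Proof.
apply/setP => y; rewrite !inE /= /cp.
by case: (inbn y x); rewrite ?ltxx // invr_gt0 ltr0n.
Qed.

Lemma C0_NN : (C0 NN <= 4)%N.
Proof.
apply/bigmax_leqP => S /forallP indS.
have inner (y : 'I_9) : (\sum_(x in S) nat_of_bool (inbn y x) <= 1)%N.
  rewrite (eq_bigr (fun x : 'I_18 => if inbn y x then 1%N else 0%N)); last by move=> x _; case: (inbn y x).
  rewrite -big_mkcondr sum1_card leqNgt; apply/negP => /card_gt1P [x1 [x2 [H1 H2 Hne]]].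
  move: H1 H2 => /andP [S1 b1] /andP [S2 b2].
  move: (indS x1); rewrite S1 /= => /forallP /(_ x2); rewrite S2 /=.
  rewrite /confusable Hne /= !Gamma_NN; apply/negP; rewrite negbK.
  by apply/set0Pn; exists y; rewrite !inE b1 b2.
have : (2 * #|S| <= 9)%N.
  have -> : (2 * #|S| = \sum_(x in S) \sum_(y < 9) nat_of_bool (inbn y x))%N.
    rewrite -sum1_card big_distrr /=; apply: eq_bigr => x _.
    by rewrite cnt.
  rewrite exchange_big /=.
  apply: (@leq_trans (\sum_(y < 9) 1)%N); first by apply: leq_sum => y _; exact: inner.
  by rewrite sum1_card card_ord.
lia.
Qed.

Lemma adjmxE m n (A : 'M[algC]_(m, n)) i j : adjmx A i j = (A j i)^*.
Proof. by rewrite /adjmx !mxE. Qed.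

Lemma adjmxK m n (A : 'M[algC]_(m, n)) : adjmx (adjmx A) = A.
Proof. by apply/matrixP => i j; rewrite !adjmxE conjCK. Qed.

Lemma adjmxM m n p (A : 'M[algC]_(m, n)) (B : 'M[algC]_(n, p)) :
  adjmx (A *m B) = adjmx B *m adjmx A.
Proof.
apply/matrixP => i j; rewrite adjmxE !mxE rmorph_sum; apply: eq_bigr => k _.
by rewrite /adjmx !mxE rmorphM mulrC.
Qed.

Lemma adjmxZ m n (a : algC) (A : 'M[algC]_(m, n)) :
  adjmx (a *: A) = a^* *: adjmx A.
Proof. by apply/matrixP => i j; rewrite /adjmx !mxE rmorphM. Qed.

Lemma mx11E (A : 'M[algC]_(1, 1)) (B : 'M[algC]_(1, 1)) :
  (A *m B) 0 0 = A 0 0 * B 0 0.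
Proof. by rewrite mxE big_ord1. Qed.

Lemma psd_proj d (u : 'cV[algC]_d) (c : algC) :
  0 <= c -> c^* = c -> psd_mx (c *: (u *m adjmx u)).
Proof.
move=> c0 cc; split.
  by rewrite /hermitian_mx adjmxZ adjmxM adjmxK cc.
move=> w.
have -> : adjmx w *m (c *: (u *m adjmx u)) *m w
          = c *: ((adjmx w *m u) *m (adjmx u *m w)).
  by rewrite -scalemxAr -scalemxAl !mulmxA.
rewrite mxE mx11E.
have -> : (adjmx u *m w) 0 0 = ((adjmx w *m u) 0 0)^*.
  by rewrite -adjmxE adjmxM adjmxK.
by rewrite mulr_ge0 // mul_conjC_ge0.
Qed.

Lemma psd0 d : psd_mx (0 : 'M[algC]_d).
Proof.
split; first by apply/matrixP => i j; rewrite /adjmx !mxE rmorph0.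
by move=> w; rewrite mulmx0 mul0mx mxE.
Qed.

Definition vv (m : 'I_18) : 'cV[algC]_4 := \col_(i < 4) (vt m i)%:~R.
Definition cc (m : 'I_18) : algC := (wt m)%:R / 4.
Definition PP (m : 'I_18) : 'M[algC]_4 := cc m *: (vv m *m adjmx (vv m)).

Lemma cc_ge0 m : 0 <= cc m.
Proof. by rewrite /cc mulr_ge0 // invr_ge0 ler0n. Qed.

Lemma cc_conj m : (cc m)^* = cc m.
Proof. by rewrite /cc rmorphM fmorphV !rmorph_nat. Qed.

Lemma nrmE m : (adjmx (vv m) *m vv m) 0 0 = (\sum_(i < 4) vt m i * vt m i)%:~R.
Proof.
rewrite mxE rmorph_sum; apply: eq_bigr => i _.
by rewrite /adjmx !mxE rmorph_int -intrM.
Qed.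

Lemma cc_nrm m : cc m * (adjmx (vv m) *m vv m) 0 0 = 1.
Proof.
rewrite nrmE /cc mulrAC -[(wt m)%:R]/((wt m)%:Z%:~R) -intrM norm_fact.
by rewrite mulfV // pnatr_eq0.
Qed.

Lemma PP_psd m : psd_mx (PP m).
Proof. exact: psd_proj (cc_ge0 m) (cc_conj m). Qed.

Lemma tr_PP m : \tr (PP m) = 1.
Proof.
rewrite /PP mxtraceZ mxtrace_mulC /mxtrace big_ord1.
exact: cc_nrm.
Qed.

Lemma PP_idem m : PP m *m PP m = PP m.
Proof.
rewrite /PP -scalemxAr -scalemxAl scalerA mulmxA -(mulmxA (vv m)).
have -> : adjmx (vv m) *m vv m = ((adjmx (vv m) *m vv m) 0 0)%:M.
  by apply/matrixP => i j; rewrite !ord1 [RHS]mxE eqxx mulr1n.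
rewrite mul_mx_scalar -scalemxAl scalerA -mulrA cc_nrm mulr1.
by [].
Qed.

Lemma density_PP m : density_mx (PP m).
Proof. by split; [exact: PP_psd | exact: tr_PP]. Qed.

Definition EE (y : 'I_9) (m : 'I_18) : 'M[algC]_4 := if inbn y m then PP m else 0.

Lemma povm_EE y : povm (EE y).
Proof.
split.
  by move=> m; rewrite /EE; case: ifP => _; [exact: PP_psd | exact: psd0].
apply/matrixP => i j; rewrite summxE.
have -> : \sum_(m < 18) EE y m i j
   = (\sum_(m < 18) (if inbn y m then (wt m)%:Z * vt m i * vt m j else 0))%:~R / 4.
  rewrite rmorph_sum mulr_suml; apply: eq_bigr => m _.
  rewrite /EE; case: ifP => _; last by rewrite mxE rmorph0 mul0r.
  rewrite /PP mxE mxE big_ord1 /adjmx !mxE rmorph_int /cc !rmorphM /=.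
  by change ((wt m)%:Z%:~R) with ((wt m)%:R : algC); ring.
rewrite sum_fact mxE; change (((4 * (i == j))%N)%:Z%:~R) with (((4 * (i == j))%N)%:R : algC); rewrite natrM.
by rewrite mulrAC mulfV ?pnatr_eq0 // mul1r.
Qed.


Lemma trace_ok (m : 'I_18) : \sum_y cprob NN m y * \tr (EE y m *m PP m) = 1.
Proof.
rewrite -(cp_sum1 m); apply: eq_bigr => y _.
change (cprob NN m y) with (cp m y); rewrite /cp /EE; case: ifP => _.
  by rewrite PP_idem tr_PP mulr1.
by rewrite mul0mx mxtrace0 mulr0.
Qed.

Lemma code : zero_error_code_parallel NN 4 18.
Proof.
exists id, PP, EE; split; first exact: density_PP.
split; first exact: povm_EE.
exact: trace_ok.
Qed.

Lemma cmp : (C0 NN * 4 < 18)%N.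
Proof. by move: C0_NN; lia. Qed.
Theorem theorem1 :
  exists (X Y : finType) (N : cchannel X Y) (d : nat),
    noisy N /\ (1 <= d)%N /\
    exists M : nat, (C0 N * d < M)%N /\ zero_error_code_parallel N d M.
Proof.
exists 'I_18, 'I_9, NN, 4%N.
split; first exact: NN_noisy.
split; first by [].
exists 18%N; split; first exact: cmp.
exact: code.
Qed.
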